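(* Let $G$ and $H$ be graphs. If $H$ is a subdivision of $G$, then $\mathrm{ecrw}(G)\le 2\,\mathrm{ecrw}(H)$.
   Context: A tree-cut decomposition of a graph $G$ is a pair $\mathcal{T}=(T,\{X_t\}_{t\in V(T)})$ where $T$ is a tree and the bags $X_t\subseteq V(G)$ are pairwise disjoint (possibly empty) with $\bigcup_{t\in V(T)}X_t=V(G)$. For a node $t$ of $T$, let $T_1,\dots,T_m$ be the connected components of $T-t$ and $Z_i=\bigcup_{s\in V(T_i)}X_s$; $\mathrm{cross}_{\mathcal{T}}(t)$ is the number of edges of $G$ whose two endpoints lie in two distinct sets among $Z_1,\dots,Z_m$ (if $T$ has one node, $\mathrm{cross}_{\mathcal T}(t)=0$). The crossing number of $\mathcal{T}$ is $\max_{t}\mathrm{cross}_{\mathcal{T}}(t)$, and the thickness of $\mathcal{T}$ is $\max_t|X_t|$. The edge-crossing width of $\mathcal T$ is the maximum of its crossing number and its thickness, and $\mathrm{ecrw}(G)$ is the minimum edge-crossing width over all tree-cut decompositions of $G$. $H$ is a subdivision of $G$ if $H$ is obtained from $G$ by repeatedly subdividing edges. *)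

(* Defs.v *)
From HB Require Import structures.
From mathcomp Require Import all_boot.
From Stdlib Require Import ClassicalEpsilon.
Set Implicit Arguments. Unset Strict Implicit. Unset Printing Implicit Defensive.

Record graph := Graph {
  gV : finType;
  gadj : rel gV;
  gsym : symmetric gadj;
  girr : irreflexive gadj }.

Definition edges (G : graph) : {set {set gV G}} :=
  [set [set p.1; p.2] | p in [set p : gV G * gV G | gadj p.1 p.2]].

(* A tree on node type T with adjacency e: symmetric, irreflexive, nonempty,
   connected, and with exactly |T|-1 (unordered) edges. *)
Definition is_tree (T : finType) (e : rel T) : Prop :=
  [/\ symmetric e, irreflexive e, 0 < #|T|,
      (forall a b, connect e a b) &
      #|[set p : T * T | e p.1 p.2]| = 2 * (#|T| - 1)].

Record tcd (G : graph) := TCD {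
  tT : finType;
  tE : rel tT;
  tE_tree : is_tree tE;
  bag : tT -> {set gV G};
  bag_disj : forall s t, s != t -> [disjoint bag s & bag t];
  bag_cover : forall v, exists t, v \in bag t }.

Definition restr (T : finType) (e : rel T) (t : T) : rel T :=
  fun a b => [&& a != t, b != t & e a b].

(* x and y lie in Z_i, Z_j for two distinct components T_i, T_j of T - t. *)
Definition separated (G : graph) (D : tcd G) (t : tT D) (x y : gV G) : bool :=
  [exists a, exists b,
     [&& x \in @bag G D a, y \in @bag G D b, a != t, b != t
       & ~~ connect (restr (@tE G D) t) a b]].

Definition cross (G : graph) (D : tcd G) (t : tT D) : nat :=
  #|[set e in edges G | [exists x, exists y, (e == [set x; y]) && @separated G D t x y]]|.

Definition ecwidth (G : graph) (D : tcd G) : nat :=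
  maxn (\max_(t : tT D) @cross G D t) (\max_(t : tT D) #|@bag G D t|).

Definition ecrw_le (G : graph) (k : nat) : Prop := exists D : tcd G, ecwidth D <= k.

Definition ecrw_leb (G : graph) (k : nat) : bool :=
  if excluded_middle_informative (ecrw_le G k) then true else false.

Definition trivial_tcd (G : graph) : tcd G.
Proof.
refine (@TCD G unit (fun _ _ => false) _ (fun _ => setT) _ _).
- split => //; first by rewrite card_unit.
  + move=> a b; case: a; case: b; exact: connect0.
  + rewrite card_unit /=; apply/eqP; rewrite cards_eq0; apply/eqP/setP => p.
    by rewrite !inE.
- by move=> [] [].
- by move=> v; exists tt; rewrite inE.
Defined.

Lemma ecrw_exists (G : graph) : exists k, ecrw_leb G k.
Proof.
exists (ecwidth (trivial_tcd G)); rewrite /ecrw_leb.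
case: excluded_middle_informative => // [[]].
by exists (trivial_tcd G).
Qed.

Definition ecrw (G : graph) : nat := ex_minn (ecrw_exists G).

Definition giso (G H : graph) : Prop :=
  exists f : gV G -> gV H, bijective f /\ forall x y, gadj (f x) (f y) = gadj x y.

Definition subdiv1 (G H : graph) : Prop :=
  exists (u v : gV G) (w : gV H) (f : gV G -> gV H),
  [/\ gadj u v, injective f, (forall x, f x != w) &
     [/\
      (forall z, z != w -> exists x, f x = z),
      (forall x y, gadj (f x) (f y) =
                   gadj x y && ~~ (((x == u) && (y == v)) || ((x == v) && (y == u))))
    & (forall z, gadj w z = (z == f u) || (z == f v))]].

Inductive subdivision (G : graph) : graph -> Prop :=
  | subdiv_iso H : giso G H -> subdivision G H
  | subdiv_step H H' : subdivision G H -> subdiv1 H H' -> subdivision G H'.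

(* Main.v *)
Require Import Defs.
From mathcomp Require Import all_boot.
From Stdlib Require Import ClassicalEpsilon.
Set Implicit Arguments. Unset Strict Implicit. Unset Printing Implicit Defensive.

Lemma bag_uniq (G : graph) (D : tcd G) (a b : tT D) x :
  x \in bag a -> x \in bag b -> a = b.
Proof.
move=> xa xb; apply/eqP; apply/negPn/negP => /bag_disj/disjoint_setI0 E.
have : x \in bag a :&: bag b by rewrite inE xa xb.
by rewrite E inE.
Qed.

Lemma restr_sym (G : graph) (D : tcd G) t : symmetric (restr (@tE G D) t).
Proof.
case: (tE_tree D) => sy _ _ _ _ a b; rewrite /restr sy.
by case: (a != t); case: (b != t).
Qed.

Lemma count_inj (T U : finType) (S : {set T}) (B : {set U}) (R : T -> U -> bool) :
  (forall s, s \in S -> exists u, (u \in B) && R s u) ->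
  (forall s s' u, s \in S -> s' \in S -> R s u -> R s' u -> s = s') ->
  #|S| <= #|B|.
Proof.
move=> ex inj.
pose g s := [pick u | (u \in B) && R s u].
have gS s : s \in S -> exists2 u, g s = Some u & (u \in B) && R s u.
  move=> sS; rewrite /g; case: pickP => [u Hu|H]; first by exists u.
  by case: (ex s sS) => u Hu; move: (H u); rewrite Hu.
have -> : #|S| = #|g @: S|.
  apply/esym/card_in_imset => s s' sS s'S eq.
  case: (gS s sS) => u gu /andP[_ Ru]; case: (gS s' s'S) => u' gu' /andP[_ Ru'].
  by apply: (inj s s' u) => //; move: eq; rewrite gu gu' => -[->].
have -> : #|B| = #|Some @: B| by rewrite card_imset //; exact: Some_inj.
apply: subset_leq_card; apply/subsetP => o /imsetP[s sS ->].
by case: (gS s sS) => u -> /andP[uB _]; apply/imsetP; exists u.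
Qed.

Lemma set2_eq (T : finType) (a b x y : T) :
  a != b -> a \in [set x; y] -> b \in [set x; y] -> [set a; b] = [set x; y].
Proof.
move=> ab ax bx; apply/eqP; rewrite eqEcard; apply/andP; split.
  apply/subsetP => z; rewrite !inE => /orP[] /eqP ->; [move: ax|move: bx];
  by rewrite !inE.
by rewrite !cards2 ab; case: (x != y).
Qed.

Lemma edge_of (G : graph) (x y : gV G) : [set x; y] \in edges G -> gadj x y.
Proof.
case/imsetP => p; rewrite inE => Hp E.
have p12 : p.1 != p.2 by apply/eqP => e; move: Hp; rewrite e girr.
have xy : x != y.
  apply/eqP => e; subst y; have := congr1 (fun A : {set gV G} => #|A|) E.
  by rewrite setUid cards1 cards2 p12.
have : x \in [set p.1; p.2] by rewrite -E !inE eqxx.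
have : y \in [set p.1; p.2] by rewrite -E !inE eqxx orbT.
rewrite !inE => /orP[] /eqP ey /orP[] /eqP ex; subst x y.
- by rewrite eqxx in xy.
- by rewrite gsym.
- by [].
- by rewrite eqxx in xy.
Qed.

Lemma path_cross (H : graph) (D : tcd H) (t : tT D) (a0 : gV H) s (al be : tT D) :
  path (@gadj H) a0 s -> a0 \in bag al -> last a0 s \in bag be -> al != t -> be != t ->
  ~~ connect (restr (@tE H D) t) al be ->
  (exists2 v, v \in a0 :: s & v \in bag t) \/
  exists a b, [/\ a \in a0 :: s, b \in a0 :: s, gadj a b & separated t a b].
Proof.
elim: s a0 al => [|b s IH] a0 al /=.
  move=> _ a0al a0be alt bet; rewrite (bag_uniq a0al a0be) connect0 //.
move=> /andP[ab pb] a0al lbe alt bet nc.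
case: (bag_cover D b) => ga bga.
case: (eqVneq ga t) => [gat|gat].
  by left; exists b; rewrite ?inE ?eqxx ?orbT // -gat.
case C: (connect (restr (@tE H D) t) al ga).
  have nc' : ~~ connect (restr (@tE H D) t) ga be.
    apply: contra nc => C'; exact: connect_trans C C'.
  case: (IH b ga pb bga lbe gat bet nc') => [[v vin vt]|[a [b' [ain bin ab' sep]]]].
    by left; exists v => //; rewrite inE vin orbT.
  by right; exists a, b'; split => //; rewrite inE ?ain ?bin orbT.
right; exists a0, b; split; rewrite ?inE ?eqxx ?orbT //.
apply/existsP; exists al; apply/existsP; exists ga.
by rewrite a0al bga alt gat C.
Qed.

Definition emb (G H : graph) : Prop :=
 exists (f : gV G -> gV H) (P : gV G -> gV G -> seq (gV H)),
 [/\ injective f,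
  forall x y, gadj x y -> path (@gadj H) (f x) (P x y) /\ last (f x) (P x y) = f y,
  forall x y z, gadj x y -> f z \in f x :: P x y -> z = x \/ z = y &
  forall x y x' y' v, gadj x y -> gadj x' y' -> v \in f x :: P x y ->
    v \in f x' :: P x' y' -> (forall z, f z != v) -> [set x; y] = [set x'; y']].

Lemma share2 (G H : graph) f (P : gV G -> gV G -> seq (gV H)) :
  injective f ->
  (forall x y z, gadj x y -> f z \in f x :: P x y -> z = x \/ z = y) ->
  (forall x y x' y' v, gadj x y -> gadj x' y' -> v \in f x :: P x y ->
    v \in f x' :: P x' y' -> (forall z, f z != v) -> [set x; y] = [set x'; y']) ->
  forall x y x' y' a b, gadj x y -> gadj x' y' -> a != b ->
   a \in f x :: P x y -> b \in f x :: P x y ->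
   a \in f x' :: P x' y' -> b \in f x' :: P x' y' -> [set x; y] = [set x'; y'].
Proof.
move=> inj c3 c4 x y x' y' a b xy xy' ab a1 b1 a2 b2.
have [/existsP [z1 /eqP ez1]|na] := boolP [exists z, f z == a]; last first.
  apply: (c4 _ _ _ _ a) => // z; apply: contraNneq na => e; apply/existsP; exists z; rewrite e.
  by [].
have [/existsP [z2 /eqP ez2]|nb] := boolP [exists z, f z == b]; last first.
  apply: (c4 _ _ _ _ b) => // z; apply: contraNneq nb => e; apply/existsP; exists z; rewrite e.
  by [].
subst a b.
have z12 : z1 != z2 by apply: contra ab => /eqP ->.
have mem x0 y0 z : gadj x0 y0 -> f z \in f x0 :: P x0 y0 -> z \in [set x0; y0].
  by move=> h /(c3 _ _ _ h) [] ->; rewrite !inE eqxx ?orbT.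
by rewrite -(set2_eq z12 (mem _ _ _ xy a1) (mem _ _ _ xy b1))
           (set2_eq z12 (mem _ _ _ xy' a2) (mem _ _ _ xy' b2)).
Qed.

Lemma emb_iso G H : giso G H -> emb G H.
Proof.
case=> f [/bij_inj inj hadj].
exists f, (fun x y => [:: f y]); split => //.
- by move=> x y xy /=; rewrite hadj xy.
- by move=> x y z _; rewrite !inE => /orP[] /eqP /inj ->; [left|right].
- move=> x y x' y' v _ _; rewrite !inE => /orP[] /eqP -> _ h.
    + by have := h x; rewrite eqxx.
    + by have := h y; rewrite eqxx.
Qed.

Section Step.
Variables (H H' : graph) (u v : gV H) (w : gV H') (g : gV H -> gV H').
Hypotheses (uv : gadj u v) (ginj : injective g) (gw : forall x, g x != w)
  (gadj' : forall x y, gadj (g x) (g y) =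
                   gadj x y && ~~ (((x == u) && (y == v)) || ((x == v) && (y == u))))
  (wadj : forall z, gadj w z = (z == g u) || (z == g v)).

Definition hx (a b : gV H) : seq (gV H') :=
  if ((a == u) && (b == v)) || ((a == v) && (b == u)) then [:: w; g b] else [:: g b].
Definition ex a s := flatten (pairmap hx a s).

Lemma ex_cons a b s : ex a (b :: s) = hx a b ++ ex b s.
Proof. by []. Qed.

Lemma last_hx a b x : last x (hx a b) = g b.
Proof. by rewrite /hx; case: ifP. Qed.

Lemma ex_path a s : path (@gadj H) a s ->
  path (@gadj H') (g a) (ex a s) /\ last (g a) (ex a s) = g (last a s).
Proof.
elim: s a => [|b s IH] a //= /andP[ab /IH [p l]].
rewrite ex_cons cat_path last_cat last_hx p l andbT; split => //.
rewrite /hx; case: ifP => C /=.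
  rewrite gsym !wadj /= andbT.
  by case/orP: C => /andP[/eqP -> /eqP ->]; rewrite !eqxx ?orbT.
by rewrite andbT gadj' ab C.
Qed.

Lemma ex_mem a s z : z \in g a :: ex a s ->
  (z = w /\ u \in a :: s /\ v \in a :: s) \/ exists2 b, b \in a :: s & z = g b.
Proof.
elim: s a => [|b s IH] a /=.
  by rewrite inE => /eqP ->; right; exists a; rewrite ?inE ?eqxx.
rewrite ex_cons inE mem_cat => /orP[/eqP ->|/orP[]].
- by right; exists a; rewrite ?inE ?eqxx.
- rewrite /hx; case: ifP => C; rewrite !inE.
    case/orP => [/eqP ->|/eqP ->]; last by right; exists b; rewrite ?inE ?eqxx ?orbT.
    left; split => //; case/orP: C => /andP[/eqP -> /eqP ->]; split; by rewrite ?inE ?eqxx ?orbT.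
  by move=> /eqP ->; right; exists b; rewrite ?inE ?eqxx ?orbT.
- move=> zin; have : z \in g b :: ex b s by rewrite inE zin orbT.
  case/IH => [[-> [h1 h2]]|[c cin ->]].
    by left; split => //; split; rewrite inE ?h1 ?h2 orbT.
  by right; exists c => //; rewrite inE cin orbT.
Qed.

End Step.

Lemma emb_step G H H' : emb G H -> subdiv1 H H' -> emb G H'.
Proof.
case=> f [P [finj c2 c3 c4]] [u [v [w [g [uv ginj gw [_ gadj' wadj]]]]]].
exists (g \o f), (fun x y => ex u v w g (f x) (P x y)); split.
- exact: inj_comp.
- move=> x y xy; case: (c2 x y xy) => p l.
  by case: (ex_path gadj' wadj p) => p' l'; split => //=; rewrite l' l.
- move=> x y z xy /= /(ex_mem) [[e _]|[b bin /ginj e]].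
    by move: (gw (f z)); rewrite e eqxx.
  by apply: (c3 x y z xy); rewrite e.
- move=> x y x' y' z xy xy' /= /ex_mem h1 /ex_mem h2 nz.
  have [zw|zw] := eqVneq z w.
    case: h1 => [[_ [u1 v1]]|[b _ e]]; last by move: (gw b); rewrite -e zw eqxx.
    case: h2 => [[_ [u2 v2]]|[b _ e]]; last by move: (gw b); rewrite -e zw eqxx.
    have uv' : u != v by apply/eqP => e; move: uv; rewrite e girr.
    exact: (share2 finj c3 c4 xy xy' uv' u1 v1 u2 v2).
  case: h1 => [[e _]|[b bin e1]]; first by rewrite e eqxx in zw.
  case: h2 => [[e _]|[b' bin' e2]]; first by rewrite e eqxx in zw.
  subst z; move/ginj: e2 => e2; subst b'.
  apply: (c4 _ _ _ _ b) => // z0; apply/eqP => e; move: (nz z0) => /=.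
  by rewrite e eqxx.
Qed.

Lemma emb_sub G H : subdivision G H -> emb G H.
Proof.
elim => [H0 /emb_iso //|H0 H1 _ IH s]; exact: emb_step IH s.
Qed.

Definition pull (G H : graph) (f : gV G -> gV H) (D : tcd H) : tcd G.
Proof.
refine (@TCD G (tT D) (@tE H D) (tE_tree D) (fun t => f @^-1: bag t) _ _).
- move=> s t st; rewrite -setI_eq0; apply/eqP/setP => x; rewrite !inE.
  apply/andP => -[h1 h2]; by move: st; rewrite (bag_uniq h1 h2) eqxx.
- move=> x; case: (bag_cover D (f x)) => t ht; exists t; by rewrite inE.
Defined.

Lemma cross_pull (G H : graph) (f : gV G -> gV H) P (D : tcd H) (t : tT D) :
 injective f ->
 (forall x y, gadj x y -> path (@gadj H) (f x) (P x y) /\ last (f x) (P x y) = f y) ->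
 (forall x y z, gadj x y -> f z \in f x :: P x y -> z = x \/ z = y) ->
 (forall x y x' y' v, gadj x y -> gadj x' y' -> v \in f x :: P x y ->
    v \in f x' :: P x' y' -> (forall z, f z != v) -> [set x; y] = [set x'; y']) ->
 @cross G (pull f D) t <= @cross H D t + #|bag t|.
Proof.
move=> finj c2 c3 c4.
set A := [set e in edges H | [exists x, exists y, (e == [set x; y]) && separated t x y]].
set B : {set ({set gV H} + gV H)} :=
  [set inl E | E in A] :|: [set inr z | z in bag t].
have -> : @cross H D t = #|A| by [].
have hB : #|B| <= #|A| + #|bag t|.
  rewrite cardsU !card_imset ?leq_subr //; [exact: inr_inj | exact: inl_inj].
apply: leq_trans hB.
pose Wt x y (wt : {set gV H} + gV H) :=
  match wt with
  | inl E => [exists a, exists b, [&& a \in f x :: P x y, b \in f x :: P x y,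
                 gadj a b, separated t a b & E == [set a; b]]]
  | inr z => (z \in f x :: P x y) && (z \in bag t) end.
pose R (e : {set gV G}) wt := [exists x, exists y, [&& gadj x y,
   @separated G (pull f D) t x y, e == [set x; y] & Wt x y wt]].
apply: (@count_inj _ _ _ _ R).
- move=> e; rewrite inE => /andP[eE /existsP[x /existsP[y /andP[/eqP ee sep]]]].
  have xy : gadj x y by apply: edge_of; rewrite -ee.
  move: (sep) => /existsP[al /existsP[be /and5P[xal ybe alt bet nc]]].
  rewrite inE in xal; rewrite inE in ybe.
  case: (c2 x y xy) => p l.
  rewrite -l in ybe.
  case: (path_cross p xal ybe alt bet nc) => [[z zin zt]|[a [b [ain bin ab sab]]]].
    exists (inr z); apply/andP; split; first by rewrite inE; apply/orP; right; apply/imsetP; exists z.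
    apply/existsP; exists x; apply/existsP; exists y; by rewrite xy sep ee eqxx /= zin zt.
  exists (inl [set a; b]); apply/andP; split.
    rewrite inE; apply/orP; left; apply/imsetP; exists [set a; b] => //.
    rewrite inE; apply/andP; split; first by apply/imsetP; exists (a, b); rewrite ?inE.
    by apply/existsP; exists a; apply/existsP; exists b; rewrite eqxx sab.
  apply/existsP; exists x; apply/existsP; exists y; rewrite xy sep ee eqxx /=.
  by apply/existsP; exists a; apply/existsP; exists b; rewrite ain bin ab sab eqxx.
- move=> e e' wt _ _ /existsP[x /existsP[y /and4P[xy sep /eqP -> W]]]
    /existsP[x' /existsP[y' /and4P[xy' sep' /eqP -> W']]].
  case: wt W W' => [E|z] /=.
    move=> /existsP[a /existsP[b /and5P[a1 b1 ab _ /eqP EE]]].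
    move=> /existsP[a' /existsP[b' /and5P[a2 b2 _ _ /eqP EE']]].
    have ab' : a != b by apply/eqP => eab; move: ab; rewrite eab girr.
    have ain : a \in [set a'; b'] by rewrite -EE' EE !inE eqxx.
    have bin : b \in [set a'; b'] by rewrite -EE' EE !inE eqxx orbT.
    move: ain bin; rewrite !inE => ain bin.
    have a3 : a \in f x' :: P x' y' by case/orP: ain => /eqP ->.
    have b3 : b \in f x' :: P x' y' by case/orP: bin => /eqP ->.
    exact: (share2 finj c3 c4 xy xy' ab' a1 b1 a3 b3).
  move=> /andP[z1 zt] /andP[z2 _].
  apply: (c4 _ _ _ _ z) => // z0; apply/eqP => ez.
  move: (sep) => /existsP[al /existsP[be /and5P[xal ybe alt bet _]]].
  rewrite inE in xal; rewrite inE in ybe.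
  subst z.
  case: (c3 x y z0 xy) => //.
    by move=> e0; subst z0; move: alt; rewrite (bag_uniq xal zt) eqxx.
  by move=> e0; subst z0; move: bet; rewrite (bag_uniq ybe zt) eqxx.
Qed.

Theorem lemma3p13 (G H : graph) :
  subdivision G H -> ecrw G <= 2 * ecrw H.
Proof.
move=> /emb_sub [f [P [finj c2 c3 c4]]].
have [D hD] : exists D : tcd H, ecwidth D <= ecrw H.
  rewrite /ecrw; case: ex_minnP => m hm _.
  by move: hm; rewrite /ecrw_leb; case: excluded_middle_informative.
set k := ecrw H in hD *.
have hle : ecrw_le G (2 * k).
  exists (pull f D); rewrite /ecwidth geq_max; apply/andP; split.
  - apply/bigmax_leqP => t _.
    have := cross_pull (D:=D) t finj c2 c3 c4; move/leq_trans; apply.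
    rewrite mul2n -addnn leq_add //.
      apply: leq_trans hD; apply: leq_trans (leq_maxl _ _); exact: (leq_bigmax t).
    apply: leq_trans hD; apply: leq_trans (leq_maxr _ _); exact: (leq_bigmax (F := fun t => #|@bag H D t|) t).
  - apply/bigmax_leqP => t _; change (#|f @^-1: @bag H D t| <= 2 * k).
    have h1 : #|f @^-1: @bag H D t| <= #|@bag H D t|.
      rewrite -(card_imset _ finj); apply: subset_leq_card; apply/subsetP => z.
      by case/imsetP => x; rewrite inE => hx ->.
    apply: (leq_trans h1); rewrite mul2n -addnn; apply: leq_trans (leq_trans _ hD) (leq_addl k k).
    apply: leq_trans (leq_maxr _ _); exact: (leq_bigmax (F := fun t => #|@bag H D t|) t).
rewrite /ecrw; case: ex_minnP => m _ hmin; apply: hmin.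
by rewrite /ecrw_leb; case: excluded_middle_informative.
Qed.
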